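(* Let $\mathcal B=(\mathcal B_1,\dots,\mathcal B_B)$ be a partition of $\{1,\dots,N\}$ with weights $\omega=(\omega_1,\dots,\omega_B)$, $\omega_b\ge1$. Let $1\le p\le q\le2$ and suppose $A\in\mathbb R^{m\times N}$ satisfies the $\ell^q_\omega$-BRNSP of order $s\ge\|\omega\|_\infty^2$ with constants $0<\rho<1$ and $\tau>0$. Then for all $x,z\in\mathbb R^N$, $$\|z-x\|_{2,p}^{(\omega)}\le\frac{C_\rho}{s^{1-1/p}}\Big(\|z\|_{2,1}^{(\omega)}-\|x\|_{2,1}^{(\omega)}+2\sigma_s(x)_{2,1}^{(\omega)}\Big)+\frac{D_{\rho,\tau}}{s^{1/q-1/p}}\|A(z-x)\|_2,$$ with $C_\rho=\frac{(1+\rho)^2}{1-\rho}$ and $D_{\rho,\tau}=\frac{3+\rho}{1-\rho}\tau$.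
   Context: Block structure: $\mathcal B=(\mathcal B_1,\dots,\mathcal B_B)$ partition of $\{1,\dots,N\}$; $x[b]=x[\mathcal B_b]$; for $S\subseteq\{1,\dots,B\}$, $x[S]$ equals $x$ on blocks in $S$ and $0$ elsewhere, $S^c$ its complement in $\{1,\dots,B\}$. Weights $\omega_b\ge1$, $\|\omega\|_\infty=\max_b\omega_b$, $\omega(S)=\sum_{b\in S}\omega_b^2$. $\|x\|_{2,p}^{(\omega)}=\big(\sum_b\omega_b^{2-p}\|x[b]\|_2^p\big)^{1/p}$. $\|x\|_0^{(\omega)}=\omega(\{b:x[b]\ne0\})$. $\sigma_s(x)_{2,p}^{(\omega)}=\inf\{\|x-z\|_{2,p}^{(\omega)}:\|z\|_0^{(\omega)}\le s\}$. Definition ($\ell^p_\omega$-BRNSP): $A\in\mathbb R^{m\times N}$ satisfies the weighted block $\ell^p$ robust null space property of order $s\ge\|\omega\|_\infty$ with constants $\rho\in(0,1)$, $\tau>0$ if $\|x[S]\|_{2,p}^{(\omega)}\le\frac{\rho}{s^{1-1/p}}\|x[S^c]\|_{2,1}^{(\omega)}+\tau\|Ax\|_2$ for all $x\in\mathbb R^N$ and all $S\subseteq\{1,\dots,B\}$ with $\omega(S)\le s$. *)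

(* Defs.v *)
From Stdlib Require Import Reals Lra ClassicalEpsilon.
Open Scope R_scope.

Fixpoint fsum (n : nat) (f : nat -> R) : R :=
  match n with O => 0 | S k => fsum k f + f k end.

Fixpoint fmax (n : nat) (f : nat -> R) : R :=
  match n with O => 0 | S k => Rmax (fmax k f) (f k) end.

(* t^a for t >= 0, with the convention 0^a = 0 (a > 0 in all uses) *)
Definition rpow (t a : R) : R :=
  if Req_EM_T t 0 then 0 else Rpower t a.

(* Setting: vectors of R^N are functions nat -> R (only indices < N matter);
   blk i (for i < N) is the index in {0,..,B-1} of the block containing i;
   w b (for b < B) is the weight omega_b. *)

Definition blocknorm (N : nat) (blk : nat -> nat) (x : nat -> R) (b : nat) : R :=
  sqrt (fsum N (fun i => if Nat.eqb (blk i) b then (x i)^2 else 0)).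

Definition wnorm (N B : nat) (blk : nat -> nat) (w : nat -> R) (p : R)
  (x : nat -> R) : R :=
  rpow (fsum B (fun b => Rpower (w b) (2 - p) * rpow (blocknorm N blk x b) p)) (1 / p).

Definition wsize (B : nat) (w : nat -> R) (S : nat -> bool) : R :=
  fsum B (fun b => if S b then (w b)^2 else 0).

Definition winf (B : nat) (w : nat -> R) : R := fmax B w.

Definition restr (blk : nat -> nat) (S : nat -> bool) (x : nat -> R) : nat -> R :=
  fun i => if S (blk i) then x i else 0.

Definition compl (S : nat -> bool) : nat -> bool := fun b => negb (S b).

Definition wzero (N B : nat) (blk : nat -> nat) (w : nat -> R) (x : nat -> R) : R :=
  wsize B w (fun b => if Req_EM_T (blocknorm N blk x b) 0 then false else true).

Definition is_glb (E : R -> Prop) (r : R) : Prop :=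
  (forall y, E y -> r <= y) /\ (forall l, (forall y, E y -> l <= y) -> l <= r).

Definition best_s_term_err (N B : nat) (blk : nat -> nat) (w : nat -> R) (s p : R)
  (x : nat -> R) : R :=
  epsilon (inhabits 0)
    (is_glb (fun r => exists z : nat -> R,
               wzero N B blk w z <= s /\ r = wnorm N B blk w p (fun i => x i - z i))).

Definition matvec (m N : nat) (A : nat -> nat -> R) (x : nat -> R) : nat -> R :=
  fun j => fsum N (fun i => A j i * x i).

Definition norm2 (m : nat) (y : nat -> R) : R := sqrt (fsum m (fun j => (y j)^2)).

Definition BRNSP (m N B : nat) (blk : nat -> nat) (w : nat -> R)
  (A : nat -> nat -> R) (p s rho tau : R) : Prop :=
  winf B w <= s /\ 0 < rho < 1 /\ 0 < tau /\
  forall (x : nat -> R) (S : nat -> bool),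
    wsize B w S <= s ->
    wnorm N B blk w p (restr blk S x)
      <= rho / Rpower s (1 - 1 / p) * wnorm N B blk w 1 (restr blk (compl S) x)
         + tau * norm2 m (matvec m N A x).

(* Main.v *)
Require Import Defs.
From Stdlib Require Import Reals.
From Stdlib Require Import Lra Lia ClassicalEpsilon.
Open Scope R_scope.

Lemma fsum_ext n f g : (forall b, (b < n)%nat -> f b = g b) -> fsum n f = fsum n g.
Proof. induction n; simpl; intros H; auto. rewrite IHn by (intros; apply H; lia). rewrite H by lia; auto. Qed.

Lemma fsum_le n f g : (forall b, (b < n)%nat -> f b <= g b) -> fsum n f <= fsum n g.
Proof. induction n; simpl; intros H; [lra|]. assert (f n <= g n) by (apply H; lia).
 assert (fsum n f <= fsum n g) by (apply IHn; intros; apply H; lia). lra. Qed.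

Lemma fsum_plus n f g : fsum n (fun b => f b + g b) = fsum n f + fsum n g.
Proof. induction n; simpl; [lra|]. rewrite IHn; lra. Qed.

Lemma fsum_scal n c f : fsum n (fun b => c * f b) = c * fsum n f.
Proof. induction n; simpl; [lra|]. rewrite IHn; lra. Qed.

Lemma fsum_zero n : fsum n (fun _ => 0) = 0.
Proof. induction n; simpl; [lra|]. rewrite IHn; lra. Qed.

Lemma fsum_nonneg n f : (forall b, (b < n)%nat -> 0 <= f b) -> 0 <= fsum n f.
Proof. intros H. rewrite <- (fsum_zero n). apply fsum_le; auto. Qed.

Lemma fsum_zero_nonneg n f : (forall b, (b < n)%nat -> 0 <= f b) -> fsum n f = 0 ->
  forall b, (b < n)%nat -> f b = 0.
Proof. induction n; simpl; intros H E b Hb; [lia|].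
 assert (0 <= fsum n f) by (apply fsum_nonneg; intros; apply H; lia).
 assert (0 <= f n) by (apply H; lia).
 destruct (Nat.eq_dec b n). subst; lra. apply IHn; try lra; try lia. intros; apply H; lia. Qed.

Lemma fsum_split n (S : nat -> bool) f :
  fsum n f = fsum n (fun b => if S b then f b else 0) + fsum n (fun b => if S b then 0 else f b).
Proof. rewrite <- fsum_plus. apply fsum_ext; intros; destruct (S b); lra. Qed.

Lemma fsum_CS n a c : (fsum n (fun i => a i * c i))^2 <= fsum n (fun i => (a i)^2) * fsum n (fun i => (c i)^2).
Proof. induction n; cbn [fsum]; [lra|].
 set (C := fsum n (fun i => a i * c i)) in *. set (A := fsum n (fun i => a i ^2)) in *.
 set (D := fsum n (fun i => c i ^2)) in *.
 assert (HA : 0 <= A) by (apply fsum_nonneg; intros; nra).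
 assert (HD : 0 <= D) by (apply fsum_nonneg; intros; nra).
 assert (2 * C * (a n * c n) <= A * c n ^2 + D * a n ^2).
 { destruct (Req_dec A 0) as [E|E].
   - assert (C = 0) by (rewrite E in IHn; nra). subst; rewrite H, E. nra.
   - assert (0 < A) by lra. apply (Rmult_le_reg_l A); auto.
     assert (0 <= (A * c n - C * a n)^2) by apply pow2_ge_0.
     assert (0 <= (A * D - C^2) * (a n)^2) by (apply Rmult_le_pos; [lra|apply pow2_ge_0]). nra. }
 assert (E1: (C + a n * c n)^2 = C^2 + 2*C*(a n*c n) + (a n * c n)^2) by ring.
 assert (E2: (A + a n^2)*(D+c n^2) = A*D + A*c n^2 + D*a n^2 + (a n*c n)^2) by ring.
 rewrite E1,E2. lra. Qed.

Lemma sqrt_mink n a c : sqrt (fsum n (fun i => (a i + c i)^2)) <=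
  sqrt (fsum n (fun i => (a i)^2)) + sqrt (fsum n (fun i => (c i)^2)).
Proof.
 set (A := fsum n (fun i => a i ^2)). set (D := fsum n (fun i => c i ^2)).
 assert (HA : 0 <= A) by (apply fsum_nonneg; intros; nra).
 assert (HD : 0 <= D) by (apply fsum_nonneg; intros; nra).
 assert (E : fsum n (fun i => (a i + c i)^2) = A + D + 2 * fsum n (fun i => a i * c i)).
 { unfold A, D. rewrite <- fsum_scal, <- !fsum_plus. apply fsum_ext; intros; ring. }
 assert (H0 : 0 <= fsum n (fun i => (a i + c i)^2)) by (apply fsum_nonneg; intros; apply pow2_ge_0).
 apply Rsqr_incr_0_var. 2: (pose proof (sqrt_pos A); pose proof (sqrt_pos D); lra).
 rewrite Rsqr_sqrt by auto. rewrite E.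
 assert (fsum n (fun i => a i * c i) <= sqrt A * sqrt D).
 { rewrite <- sqrt_mult by auto. apply Rsqr_incr_0_var. 2: apply sqrt_pos.
   rewrite Rsqr_sqrt by nra. unfold Rsqr. pose proof (fsum_CS n a c). fold A D in H. nra. }
 pose proof (sqrt_sqrt A HA). pose proof (sqrt_sqrt D HD). unfold Rsqr. nra. Qed.

Lemma Rpower_pos x y : 0 < Rpower x y.
Proof. unfold Rpower; apply exp_pos. Qed.

Lemma rpow_nonneg t a : 0 <= rpow t a.
Proof. unfold rpow; destruct Req_EM_T; [lra|]. left; apply Rpower_pos. Qed.

Lemma rpow_0 a : rpow 0 a = 0.
Proof. unfold rpow; destruct Req_EM_T; [auto|lra]. Qed.

Lemma rpow_pos t a : 0 < t -> rpow t a = Rpower t a.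
Proof. intros; unfold rpow; destruct Req_EM_T; [lra|auto]. Qed.

Lemma rpow_1 t : 0 <= t -> rpow t 1 = t.
Proof. intros H; destruct (Req_dec t 0). subst; apply rpow_0. rewrite rpow_pos by lra. apply Rpower_1; lra. Qed.

Lemma rpow_le a x y : 0 <= a -> 0 <= x <= y -> rpow x a <= rpow y a.
Proof. intros Ha Hx. destruct (Req_dec x 0). subst; rewrite rpow_0; apply rpow_nonneg.
 rewrite !rpow_pos by lra. apply Rle_Rpower_l; lra. Qed.

Lemma ln_le' x y : 0 < x -> x <= y -> ln x <= ln y.
Proof. intros; destruct (Req_dec x y). subst; lra. left; apply ln_increasing; lra. Qed.

Lemma exp_le' x y : x <= y -> exp x <= exp y.
Proof. intros; destruct (Req_dec x y). subst; lra. left; apply exp_increasing; lra. Qed.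

Lemma Rpower_ge1 c e : 1 <= c -> 0 <= e -> 1 <= Rpower c e.
Proof. intros. unfold Rpower. rewrite <- exp_0. apply exp_le'.
 assert (0 <= ln c) by (rewrite <- ln_1; apply ln_le'; lra). nra. Qed.

Lemma Rpower_le1 c e : 0 < c <= 1 -> 0 <= e -> Rpower c e <= 1.
Proof. intros. unfold Rpower. rewrite <- exp_0. apply exp_le'.
 assert (ln c <= 0) by (rewrite <- ln_1; apply ln_le'; lra). nra. Qed.

Lemma bernoulli y r : 0 <= y -> 1 <= r -> 1 + r * (y - 1) <= rpow y r.
Proof. intros Hy Hr. destruct (Req_dec y 0). subst; rewrite rpow_0; lra.
 rewrite rpow_pos by lra.
 set (g := fun x => Rpower x r - r * x).
 assert (Hd : forall c, 0 < c -> derivable_pt_lim g c (r * Rpower c (r-1) - r)).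
 { intros c Hc. unfold g. apply derivable_pt_lim_minus. apply derivable_pt_lim_power; auto.
   replace r with (r * 1) at 2 by ring. apply derivable_pt_lim_scal. apply derivable_pt_lim_id. }
 assert (Hg1 : g 1 <= g y).
 { destruct (Rtotal_order y 1) as [Hl|[He|Hg]].
   - destruct (MVT_cor2 g (fun c => r * Rpower c (r-1) - r) y 1 Hl) as [c [E Hc]].
     { intros; apply Hd; lra. }
     assert (Rpower c (r-1) <= 1) by (apply Rpower_le1; lra).
     assert (0 <= r * (1 - Rpower c (r-1)) * (1-y)) by (apply Rmult_le_pos; [apply Rmult_le_pos|]; lra). nra.
   - subst; lra.
   - destruct (MVT_cor2 g (fun c => r * Rpower c (r-1) - r) 1 y Hg) as [c [E Hc]].
     { intros; apply Hd; lra. }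
     assert (1 <= Rpower c (r-1)) by (apply Rpower_ge1; lra).
     assert (0 <= r * (Rpower c (r-1) - 1) * (y - 1)) by (apply Rmult_le_pos; [apply Rmult_le_pos|]; lra). nra. }
 unfold g in Hg1; cbv beta in Hg1. assert (Rpower 1 r = 1) by (unfold Rpower; rewrite ln_1, Rmult_0_r; apply exp_0). lra. Qed.

Lemma Rdiv_nonneg a b : 0 <= a -> 0 < b -> 0 <= a / b.
Proof. intros; unfold Rdiv; apply Rmult_le_pos; auto; left; apply Rinv_0_lt_compat; auto. Qed.

Lemma holder_abs n (mu f : nat -> R) p q s :
  (forall b, (b < n)%nat -> 0 <= mu b) -> (forall b, (b < n)%nat -> 0 <= f b) ->
  1 <= p -> p <= q -> fsum n mu <= s -> 0 < s ->
  rpow (fsum n (fun b => mu b * rpow (f b) p)) (1/p)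
  <= Rpower s (1/p - 1/q) * rpow (fsum n (fun b => mu b * rpow (f b) q)) (1/q).
Proof.
 intros Hmu Hf Hp Hpq HM Hs.
 set (X := fsum n (fun b => mu b * rpow (f b) p)).
 set (Y := fsum n (fun b => mu b * rpow (f b) q)).
 set (M := fsum n mu).
 assert (HX : 0 <= X) by (apply fsum_nonneg; intros; apply Rmult_le_pos; auto; apply rpow_nonneg).
 assert (HY : 0 <= Y) by (apply fsum_nonneg; intros; apply Rmult_le_pos; auto; apply rpow_nonneg).
 destruct (Req_dec X 0) as [X0|X0].
 { rewrite X0, rpow_0. apply Rmult_le_pos. left; apply Rpower_pos. apply rpow_nonneg. }
 assert (HM0 : 0 < M).
 { assert (0 <= M) by (apply fsum_nonneg; auto). destruct (Req_dec M 0) as [E|E]; [|lra].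
   exfalso; apply X0. unfold X. rewrite <- (fsum_zero n). apply fsum_ext; intros.
   rewrite (fsum_zero_nonneg n mu Hmu E b H0). ring. }
 set (A := X / M). assert (HA : 0 < A) by (unfold A; apply Rdiv_lt_0_compat; lra).
 set (r := q / p). assert (Hr : 1 <= r) by (unfold r; apply (Rmult_le_reg_r p); [lra|]; field_simplify; lra).
 assert (Hterm : forall b, (b < n)%nat ->
   mu b * (1 + r * (rpow (f b) p / A - 1)) <= mu b * rpow (f b) q / Rpower A r).
 { intros b Hb. unfold Rdiv at 2. rewrite Rmult_assoc. apply Rmult_le_compat_l; auto.
   replace (rpow (f b) q * / Rpower A r) with (rpow (rpow (f b) p / A) r).
   apply bernoulli; auto. apply Rdiv_nonneg; auto; apply rpow_nonneg.
   destruct (Req_dec (f b) 0) as [E|E].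
   - rewrite E, !rpow_0. unfold Rdiv; rewrite Rmult_0_l, rpow_0; ring.
   - assert (0 < f b) by (pose proof (Hf b Hb); lra).
     rewrite (rpow_pos (f b)) by auto. rewrite (rpow_pos (f b)) by auto.
     rewrite rpow_pos by (apply Rdiv_lt_0_compat; auto; apply Rpower_pos).
     unfold Rpower. unfold Rdiv. rewrite ln_mult by (try apply exp_pos; apply Rinv_0_lt_compat; auto).
     rewrite ln_Rinv, ln_exp by auto. rewrite <- exp_Ropp, <- exp_plus. f_equal. unfold r. field. lra. }
 assert (Hsum : M <= Y / Rpower A r).
 { assert (E1 : fsum n (fun b => mu b * (1 + r * (rpow (f b) p / A - 1))) = M + r * (X / A - M)).
   { transitivity (fsum n (fun b => (1 - r) * mu b + (r * / A) * (mu b * rpow (f b) p))).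
     apply fsum_ext; intros; field; lra.
     rewrite fsum_plus, !fsum_scal. fold X M. field. lra. }
   assert (E2 : X / A = M) by (unfold A; field; lra).
   assert (E3 : Y / Rpower A r = fsum n (fun b => mu b * rpow (f b) q / Rpower A r)).
   { unfold Y, Rdiv. rewrite Rmult_comm, <- fsum_scal. apply fsum_ext; intros; ring. }
   rewrite E3. rewrite E2 in E1. replace M with (M + r * (M - M)) at 1 by ring. rewrite <- E1.
   apply fsum_le; auto. }
 assert (HAr := Rpower_pos A r).
 assert (HY2 : M * Rpower A r <= Y).
 { apply (Rmult_le_reg_r (/ Rpower A r)). apply Rinv_0_lt_compat; auto.
   rewrite Rmult_assoc, Rinv_r by lra. fold (Rdiv Y (Rpower A r)). lra. }
 assert (HY0 : 0 < Y) by (pose proof (Rmult_lt_0_compat _ _ HM0 HAr); lra).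
 replace X with (A * M) by (unfold A; field; lra).
 rewrite rpow_pos by (apply Rmult_lt_0_compat; auto). rewrite (rpow_pos Y) by auto.
 apply Rle_trans with (Rpower M (1/p - 1/q) * Rpower (M * Rpower A r) (1/q)).
 - right. unfold Rpower at 3. unfold Rpower.
   rewrite !ln_mult, ln_exp by (auto; apply exp_pos). rewrite <- exp_plus. f_equal.
   unfold r. field. split; lra.
 - assert (0 <= 1/p - 1/q).
   { assert (1/q <= 1/p) by (apply Rmult_le_reg_l with (p*q); [nra|]; field_simplify; lra). lra. }
   apply Rmult_le_compat. left; apply Rpower_pos. left; apply Rpower_pos.
   apply Rle_Rpower_l; [assumption|split; assumption].
   apply Rle_Rpower_l. left; apply Rdiv_lt_0_compat; lra. split; [|assumption].
   apply Rmult_lt_0_compat; assumption.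
Qed.

Lemma stechkin_abs n (mu f : nat -> R) p s :
  (forall b, (b < n)%nat -> 0 <= mu b) -> (forall b, (b < n)%nat -> 0 <= f b) ->
  1 <= p -> 0 < s ->
  exists S0 : nat -> bool,
    fsum n (fun b => if S0 b then mu b else 0) <= s /\
    rpow (fsum n (fun b => (if S0 b then 0 else mu b) * rpow (f b) p)) (1/p)
      <= Rpower s (1/p - 1) * fsum n (fun b => mu b * f b).
Proof.
 intros Hmu Hf Hp Hs.
 set (T1 := fsum n (fun b => mu b * f b)).
 assert (HT : 0 <= T1) by (apply fsum_nonneg; intros; apply Rmult_le_pos; auto).
 set (t := T1 / s). assert (Ht : 0 <= t) by (apply Rdiv_nonneg; auto).
 exists (fun b => if Rlt_dec t (f b) then true else false). split.
 - destruct (Req_dec T1 0) as [E|E].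
   + apply Rle_trans with (fsum n (fun _ => 0)); [|rewrite fsum_zero; lra]. right. apply fsum_ext; intros b Hb.
     destruct Rlt_dec; [|reflexivity].
     assert (mu b * f b = 0) by (apply (fsum_zero_nonneg n (fun b => mu b * f b)); auto;
       intros; apply Rmult_le_pos; auto).
     assert (t = 0) by (unfold t; rewrite E; unfold Rdiv; ring).
     assert (0 < f b) by lra. destruct (Rmult_integral _ _ H) as [Hz|Hz]; [exact Hz|lra].
   + assert (HT2 : 0 < T1) by (destruct HT as [h|h]; [exact h|congruence]). assert (Htp : 0 < t) by (apply Rdiv_lt_0_compat; lra).
     apply (Rmult_le_reg_l t); auto.
     rewrite <- fsum_scal. apply Rle_trans with T1.
     * unfold T1. apply fsum_le. intros b Hb. destruct Rlt_dec.
       -- pose proof (Hmu b Hb); nra.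
       -- rewrite Rmult_0_r. apply Rmult_le_pos; auto.
     * right. unfold t. field. lra.
 - assert (Hsum : fsum n (fun b => (if (if Rlt_dec t (f b) then true else false) then 0 else mu b) * rpow (f b) p)
                  <= rpow t (p - 1) * T1).
   { unfold T1. rewrite <- fsum_scal. apply fsum_le. intros b Hb. destruct Rlt_dec.
     - rewrite Rmult_0_l. apply Rmult_le_pos. apply rpow_nonneg. apply Rmult_le_pos; auto.
     - assert (rpow (f b) p <= rpow t (p-1) * f b).
       { destruct (Req_dec (f b) 0) as [E|E]. rewrite E, rpow_0. lra.
         assert (0 < f b) by (pose proof (Hf b Hb); lra).
         rewrite rpow_pos by auto.
         replace p with ((p - 1) + 1) at 1 by ring. rewrite Rpower_plus, Rpower_1 by auto.
         apply Rmult_le_compat_r; [lra|]. rewrite <- rpow_pos by auto. apply rpow_le; lra. }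
       pose proof (Hmu b Hb). nra. }
   apply Rle_trans with (rpow (rpow t (p-1) * T1) (1/p)).
   { apply rpow_le. apply Rdiv_nonneg; lra. split; auto.
     apply fsum_nonneg; intros. apply Rmult_le_pos. destruct Rlt_dec; auto; lra. apply rpow_nonneg. }
   destruct (Req_dec T1 0) as [E|E].
   { rewrite E, Rmult_0_r, rpow_0. lra. }
   assert (HT2 : 0 < T1) by (destruct HT as [h|h]; [exact h|congruence]). assert (Htp : 0 < t) by (apply Rdiv_lt_0_compat; lra).
   right. rewrite (rpow_pos t) by auto. rewrite rpow_pos by (apply Rmult_lt_0_compat; [apply Rpower_pos|lra]).
   unfold Rpower. rewrite ln_mult by (try apply exp_pos; lra). rewrite ln_exp.
   unfold t, Rdiv. rewrite ln_mult by (try apply Rinv_0_lt_compat; lra). rewrite ln_Rinv by lra.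
   rewrite <- (exp_ln T1) at 3 by lra. rewrite <- exp_plus. f_equal. field. lra.
Qed.

Lemma bn_nonneg N blk u b : 0 <= blocknorm N blk u b.
Proof. apply sqrt_pos. Qed.

Lemma bn_restr N blk S u b :
  blocknorm N blk (restr blk S u) b = if S b then blocknorm N blk u b else 0.
Proof. unfold blocknorm, restr. destruct (S b) eqn:HS.
 - f_equal. apply fsum_ext; intros i _. destruct (Nat.eqb (blk i) b) eqn:E; auto.
   apply Nat.eqb_eq in E. rewrite E, HS. auto.
 - transitivity (sqrt (fsum N (fun _ => 0))); [|rewrite fsum_zero; apply sqrt_0].
   f_equal. apply fsum_ext; intros i _.
   destruct (Nat.eqb (blk i) b) eqn:E; auto. apply Nat.eqb_eq in E. rewrite E, HS. simpl; ring.
Qed.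

Lemma bn_tri N blk u1 u2 u3 b : (forall i, u3 i = u1 i + u2 i) ->
  blocknorm N blk u3 b <= blocknorm N blk u1 b + blocknorm N blk u2 b.
Proof. intros H. unfold blocknorm.
 set (c := fun i => if Nat.eqb (blk i) b then 1 else 0).
 pose proof (sqrt_mink N (fun i => c i * u1 i) (fun i => c i * u2 i)).
 replace (fsum N (fun i => if Nat.eqb (blk i) b then u3 i ^ 2 else 0))
   with (fsum N (fun i => (c i * u1 i + c i * u2 i)^2)).
 replace (fsum N (fun i => if Nat.eqb (blk i) b then u1 i ^ 2 else 0))
   with (fsum N (fun i => (c i * u1 i)^2)).
 replace (fsum N (fun i => if Nat.eqb (blk i) b then u2 i ^ 2 else 0))
   with (fsum N (fun i => (c i * u2 i)^2)). exact H0.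
 all: apply fsum_ext; intros i _; unfold c; destruct Nat.eqb; try rewrite H; ring.
Qed.

Lemma bn_sub N blk u1 u2 b :
  blocknorm N blk (fun i => u1 i - u2 i) b <= blocknorm N blk u1 b + blocknorm N blk u2 b.
Proof.
 replace (blocknorm N blk u2 b) with (blocknorm N blk (fun i => - u2 i) b).
 apply bn_tri; intros; ring.
 unfold blocknorm. f_equal. apply fsum_ext; intros; destruct Nat.eqb; ring.
Qed.

Lemma term_conv w a p : 1 <= w -> 0 <= a ->
  Rpower w (2 - p) * rpow a p = w ^ 2 * rpow (a / w) p.
Proof. intros Hw Ha. destruct (Req_dec a 0) as [E|E].
 - subst. unfold Rdiv; rewrite Rmult_0_l, rpow_0; ring.
 - rewrite !rpow_pos by (try apply Rdiv_lt_0_compat; lra).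
   rewrite <- Rpower_pow by lra. replace (INR 2) with 2 by (simpl; ring).
   unfold Rpower, Rdiv. rewrite ln_mult by (try apply Rinv_0_lt_compat; lra). rewrite ln_Rinv by lra.
   rewrite <- !exp_plus. f_equal. ring.
Qed.

Lemma wnorm_restr N B blk w p S u : (forall b, (b < B)%nat -> 1 <= w b) ->
  wnorm N B blk w p (restr blk S u) =
  rpow (fsum B (fun b => (if S b then (w b)^2 else 0) * rpow (blocknorm N blk u b / w b) p)) (1/p).
Proof. intros Hw. unfold wnorm. f_equal. apply fsum_ext; intros b Hb.
 rewrite bn_restr. destruct (S b).
 - apply term_conv; auto. apply bn_nonneg.
 - rewrite rpow_0; ring.
Qed.

Lemma wnorm_full N B blk w p u : (forall b, (b < B)%nat -> 1 <= w b) ->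
  wnorm N B blk w p u =
  rpow (fsum B (fun b => (w b)^2 * rpow (blocknorm N blk u b / w b) p)) (1/p).
Proof. intros Hw. change (wnorm N B blk w p u) with (wnorm N B blk w p (restr blk (fun _ => true) u)).
 apply wnorm_restr; auto. Qed.

Lemma w1_restr N B blk w S u : (forall b, (b < B)%nat -> 1 <= w b) ->
  wnorm N B blk w 1 (restr blk S u) = fsum B (fun b => if S b then w b * blocknorm N blk u b else 0).
Proof. intros Hw. rewrite wnorm_restr by auto. replace (1/1) with 1 by field.
 rewrite rpow_1. apply fsum_ext; intros b Hb. pose proof (Hw b Hb).
 destruct (S b). rewrite rpow_1. field. lra. apply Rdiv_nonneg. apply bn_nonneg. lra. ring.
 apply fsum_nonneg; intros b Hb. apply Rmult_le_pos. destruct (S b). apply pow2_ge_0. lra. apply rpow_nonneg.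
Qed.

Lemma w1_full N B blk w u : (forall b, (b < B)%nat -> 1 <= w b) ->
  wnorm N B blk w 1 u = fsum B (fun b => w b * blocknorm N blk u b).
Proof. intros Hw. change (wnorm N B blk w 1 u) with (wnorm N B blk w 1 (restr blk (fun _ => true) u)).
 apply w1_restr; auto. Qed.

Lemma rpow_subadd X Y th : 0 <= X -> 0 <= Y -> 0 < th <= 1 ->
  rpow (X + Y) th <= rpow X th + rpow Y th.
Proof. intros HX HY Hth. destruct (Req_dec (X + Y) 0) as [E|E].
 { rewrite E, rpow_0. pose proof (rpow_nonneg X th); pose proof (rpow_nonneg Y th). lra. }
 set (T := X + Y). assert (HT : 0 < T) by (unfold T in *; lra).
 assert (K : forall Z, 0 <= Z <= T -> Z * Rpower T (th - 1) <= rpow Z th).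
 { intros Z HZ. destruct (Req_dec Z 0) as [EZ|EZ]. rewrite EZ, rpow_0; lra.
   rewrite rpow_pos by lra. replace th with ((th - 1) + 1) at 2 by ring.
   rewrite Rpower_plus, Rpower_1 by lra. rewrite Rmult_comm. apply Rmult_le_compat_r. lra.
   unfold Rpower. apply exp_le'. apply Rmult_le_compat_neg_l. lra. apply ln_le'; lra. }
 assert (T * Rpower T (th - 1) = rpow T th).
 { rewrite rpow_pos by lra. replace th with ((th - 1) + 1) at 2 by ring.
   rewrite Rpower_plus, Rpower_1 by lra. ring. }
 assert (X <= T) by (unfold T; lra). assert (Y <= T) by (unfold T; lra). pose proof (K X (conj HX H0)). pose proof (K Y (conj HY H1)).
 assert (E2 : T * Rpower T (th-1) = X * Rpower T (th-1) + Y * Rpower T (th-1)) by (unfold T; ring). unfold T in *. lra.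
Qed.

Lemma fmax_ge n f b : (b < n)%nat -> f b <= fmax n f.
Proof. induction n; simpl; intros H; [lia|]. destruct (Nat.eq_dec b n). subst; apply Rmax_r.
 eapply Rle_trans; [apply IHn; lia|apply Rmax_l]. Qed.

Lemma bn_opp N blk u b : blocknorm N blk (fun i => - u i) b = blocknorm N blk u b.
Proof. unfold blocknorm. f_equal. apply fsum_ext; intros; destruct Nat.eqb; [ring|reflexivity]. Qed.

Lemma bn_sub' N blk u1 u2 u3 b : (forall i, u3 i = u1 i - u2 i) ->
  blocknorm N blk u3 b <= blocknorm N blk u1 b + blocknorm N blk u2 b.
Proof. intros H. rewrite <- (bn_opp N blk u2). apply bn_tri. intros; rewrite H; ring. Qed.

Lemma bn_zero N blk b : blocknorm N blk (fun _ => 0) b = 0.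
Proof. unfold blocknorm. transitivity (sqrt (fsum N (fun _ => 0))).
 f_equal. apply fsum_ext; intros; destruct Nat.eqb; [ring|reflexivity].
 rewrite fsum_zero; apply sqrt_0. Qed.

Lemma split_compl n (S : nat -> bool) F :
  fsum n F = fsum n (fun b => if S b then F b else 0) + fsum n (fun b => if compl S b then F b else 0).
Proof. rewrite <- fsum_plus. apply fsum_ext; intros; unfold compl; destruct (S b); simpl; ring. Qed.

Lemma glb_exists (E : R -> Prop) : (exists y, E y) -> (forall y, E y -> 0 <= y) -> exists r, is_glb E r.
Proof. intros [y0 Hy0] Hlb.
 destruct (completeness (fun y => E (- y))) as [m [Hm1 Hm2]].
 - exists 0. intros y Hy. pose proof (Hlb _ Hy). lra.
 - exists (- y0). rewrite Ropp_involutive. auto.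
 - exists (- m). split.
   + intros y Hy. assert (- y <= m) by (apply Hm1; rewrite Ropp_involutive; auto). lra.
   + intros l Hl. assert (m <= - l). { apply Hm2. intros y Hy. pose proof (Hl _ Hy). lra. } lra.
Qed.

Theorem mainTheorem4
  (m N B : nat) (blk : nat -> nat) (w : nat -> R)
  (Hblk : forall i, (i < N)%nat -> (blk i < B)%nat)
  (Hnonempty : forall b, (b < B)%nat -> exists i, (i < N)%nat /\ blk i = b)
  (Hw : forall b, (b < B)%nat -> 1 <= w b)
  (p q : R) (Hp : 1 <= p) (Hpq : p <= q) (Hq : q <= 2)
  (A : nat -> nat -> R) (s rho tau : R)
  (Hs : (winf B w)^2 <= s)
  (Hrho : 0 < rho < 1) (Htau : 0 < tau)
  (HA : BRNSP m N B blk w A q s rho tau)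
  (x z : nat -> R) :
  wnorm N B blk w p (fun i => z i - x i)
    <= ((1 + rho)^2 / (1 - rho)) / Rpower s (1 - 1 / p)
         * (wnorm N B blk w 1 z - wnorm N B blk w 1 x
            + 2 * best_s_term_err N B blk w s 1 x)
       + ((3 + rho) / (1 - rho) * tau) / Rpower s (1 / q - 1 / p)
         * norm2 m (matvec m N A (fun i => z i - x i)).
Proof.
 destruct HA as [_ [_ [_ HNSP]]].
 set (v := fun i => z i - x i).
 set (eta := norm2 m (matvec m N A v)).
 assert (Heta : 0 <= eta) by apply sqrt_pos.
 set (C := (1 + rho)^2 / (1 - rho)).
 set (D := (3 + rho) / (1 - rho) * tau).
 assert (HC : 0 < C) by (unfold C; apply Rdiv_lt_0_compat; nra).
 assert (HD : 0 < D) by (unfold D; apply Rmult_lt_0_compat; [apply Rdiv_lt_0_compat|]; lra).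
 assert (Hs0 : 0 <= s) by (pose proof (pow2_ge_0 (winf B w)); lra).
 set (sigma := best_s_term_err N B blk w s 1 x).
 set (Eset := fun r => exists z' : nat -> R, wzero N B blk w z' <= s /\
                  r = wnorm N B blk w 1 (fun i => x i - z' i)).
 assert (Hglb : is_glb Eset sigma).
 { unfold sigma, best_s_term_err. apply epsilon_spec. apply glb_exists.
   - exists (wnorm N B blk w 1 (fun i => x i - 0)). exists (fun _ => 0). split; auto.
     unfold wzero, wsize. rewrite <- (fsum_zero B) in Hs0. eapply Rle_trans; [|exact Hs0].
     right. apply fsum_ext; intros b _. rewrite bn_zero. destruct Req_EM_T; [reflexivity|lra].
   - intros y [z' [_ ->]]. apply rpow_nonneg. }
 assert (Hsig : 0 <= sigma).
 { apply Hglb. intros y [z' [_ ->]]. apply rpow_nonneg. }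
 destruct B as [|B'].
 {
   unfold wnorm. cbn [fsum]. rewrite !rpow_0.
   pose proof (Rpower_pos s (1 - 1/p)). pose proof (Rpower_pos s (1/q - 1/p)).
   apply Rplus_le_le_0_compat; apply Rmult_le_pos; try (apply Rdiv_nonneg; lra); lra. }
 set (B := S B') in *.
 assert (Hs1 : 0 < s).
 { assert (1 <= winf B w) by (eapply Rle_trans; [apply (Hw 0%nat); unfold B; lia|apply fmax_ge; unfold B; lia]).
   nra. }
 set (al := Rpower s (1 - 1/p)). set (be := Rpower s (1/p - 1/q)).
 assert (Hal : 0 < al) by apply Rpower_pos. assert (Hbe : 0 < be) by apply Rpower_pos.
 assert (E1 : Rpower s (1/q - 1/p) = / be).
 { unfold be. rewrite <- Rpower_Ropp. f_equal; ring. }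
 assert (E2 : Rpower s (1/p - 1) = / al).
 { unfold al. rewrite <- Rpower_Ropp. f_equal; ring. }
 assert (E3 : Rpower s (1 - 1/q) = al * be).
 { unfold al, be. rewrite <- Rpower_plus. f_equal; ring. }
 rewrite E1. fold al.
 set (f := fun b => blocknorm N blk v b / w b).
 assert (Hf : forall b, (b < B)%nat -> 0 <= f b).
 { intros b Hb. unfold f. apply Rdiv_nonneg. apply bn_nonneg. pose proof (Hw b Hb); lra. }
 assert (A1 : forall S, wsize B w S <= s ->
   wnorm N B blk w p (restr blk S v) <= rho / al * wnorm N B blk w 1 (restr blk (compl S) v) + tau * be * eta).
 { intros S HS.
   assert (H1 : wnorm N B blk w p (restr blk S v) <= be * wnorm N B blk w q (restr blk S v)).
   { rewrite !wnorm_restr by auto.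
     apply (holder_abs B (fun b => if S b then w b ^ 2 else 0) f p q s).
     intros b Hb; destruct (S b); [apply pow2_ge_0|lra]. exact Hf. lra. lra. exact HS. exact Hs1. }
   pose proof (HNSP v S HS) as H2. fold eta in H2. rewrite E3 in H2.
   set (W := wnorm N B blk w 1 (restr blk (compl S) v)) in *.
   eapply Rle_trans; [exact H1|].
   apply Rle_trans with (be * (rho / (al * be) * W + tau * eta)).
   apply Rmult_le_compat_l; lra. right; field; lra. }
 assert (A2 : forall S, wsize B w S <= s ->
   wnorm N B blk w 1 (restr blk S v) <= rho * wnorm N B blk w 1 (restr blk (compl S) v) + tau * (al * be) * eta).
 { intros S HS.
   assert (H1 : wnorm N B blk w 1 (restr blk S v) <= Rpower s (1/1 - 1/q) * wnorm N B blk w q (restr blk S v)).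
   { rewrite !wnorm_restr by auto.
     apply (holder_abs B (fun b => if S b then w b ^ 2 else 0) f 1 q s).
     intros b Hb; destruct (S b); [apply pow2_ge_0|lra]. exact Hf. lra. lra. exact HS. exact Hs1. }
   replace (1/1 - 1/q) with (1 - 1/q) in H1 by (field; lra). rewrite E3 in H1.
   pose proof (HNSP v S HS) as H2. fold eta in H2. rewrite E3 in H2.
   set (W := wnorm N B blk w 1 (restr blk (compl S) v)) in *.
   eapply Rle_trans; [exact H1|].
   apply Rle_trans with (al * be * (rho / (al * be) * W + tau * eta)).
   apply Rmult_le_compat_l; [nra|lra]. right; field; lra. }

 set (W1 := fun u => wnorm N B blk w 1 u).
 assert (Bl1 : forall S, wsize B w S <= s ->
   W1 v <= (1 + rho) / (1 - rho) * (W1 z - W1 x + 2 * wnorm N B blk w 1 (restr blk (compl S) x))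
           + 2 * (tau * (al * be) * eta) / (1 - rho)).
 { intros S HS. pose proof (A2 S HS) as H2. unfold W1.
   rewrite !w1_restr in * by auto. rewrite !w1_full by auto.
   set (K := tau * (al * be) * eta) in *.
   rewrite (split_compl B S (fun b => w b * blocknorm N blk v b)).
   rewrite (split_compl B S (fun b => w b * blocknorm N blk z b)).
   rewrite (split_compl B S (fun b => w b * blocknorm N blk x b)).
   set (VS := fsum B (fun b => if S b then w b * blocknorm N blk v b else 0)) in *.
   set (VC := fsum B (fun b => if compl S b then w b * blocknorm N blk v b else 0)) in *.
   set (ZS := fsum B (fun b => if S b then w b * blocknorm N blk z b else 0)).
   set (ZC := fsum B (fun b => if compl S b then w b * blocknorm N blk z b else 0)).
   set (XS := fsum B (fun b => if S b then w b * blocknorm N blk x b else 0)).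
   set (XC := fsum B (fun b => if compl S b then w b * blocknorm N blk x b else 0)).
   assert (H3 : XS <= ZS + VS).
   { unfold XS, ZS, VS. rewrite <- fsum_plus. apply fsum_le; intros b Hb. destruct (S b); [|lra].
     pose proof (Hw b Hb). assert (blocknorm N blk x b <= blocknorm N blk z b + blocknorm N blk v b).
     { apply bn_sub'. intros; unfold v; ring. } nra. }
   assert (H4 : VC <= ZC + XC).
   { unfold XC, ZC, VC. rewrite <- fsum_plus. apply fsum_le; intros b Hb. destruct (compl S b); [|lra].
     pose proof (Hw b Hb). assert (blocknorm N blk v b <= blocknorm N blk z b + blocknorm N blk x b).
     { apply bn_sub'. intros; unfold v; ring. } nra. }
   assert (HK : 0 <= K) by (unfold K; apply Rmult_le_pos; [apply Rmult_le_pos; [lra|nra]|lra]).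
   assert (H5 : (1 - rho) * VC <= (ZS + ZC) - (XS + XC) + 2 * XC + K) by lra.
   apply Rle_trans with (((1 + rho) * ((ZS + ZC) - (XS + XC) + 2 * XC) + 2 * K) / (1 - rho)).
   2: right; field; lra.
   apply (Rmult_le_reg_l (1 - rho)). lra.
   replace ((1 - rho) * (((1 + rho) * (ZS + ZC - (XS + XC) + 2 * XC) + 2 * K) / (1 - rho)))
     with ((1 + rho) * (ZS + ZC - (XS + XC) + 2 * XC) + 2 * K) by (field; lra).
   assert ((1 - rho) * VS <= (1 - rho) * (rho * VC + K)) by (apply Rmult_le_compat_l; lra).
   assert ((1 + rho) * ((1 - rho) * VC) <= (1 + rho) * ((ZS + ZC) - (XS + XC) + 2 * XC + K))
     by (apply Rmult_le_compat_l; lra).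
   nra. }

 destruct (stechkin_abs B (fun b => w b ^ 2) f p s) as [S0 [HS0 Htail]].
 { intros; apply pow2_ge_0. } { exact Hf. } { lra. } { exact Hs1. }
 assert (HS0' : wsize B w S0 <= s) by exact HS0.
 assert (Etail : wnorm N B blk w p (restr blk (compl S0) v) <= W1 v / al).
 { rewrite wnorm_restr by auto. unfold W1. rewrite w1_full by auto.
   replace (fsum B (fun b => (if compl S0 b then w b ^ 2 else 0) * rpow (blocknorm N blk v b / w b) p))
     with (fsum B (fun b => (if S0 b then 0 else w b ^ 2) * rpow (f b) p)).
   2: { apply fsum_ext; intros; unfold compl; destruct (S0 b); reflexivity. }
   eapply Rle_trans; [exact Htail|]. rewrite E2. right. unfold Rdiv. rewrite Rmult_comm. f_equal.
   apply fsum_ext; intros b Hb. unfold f. pose proof (Hw b Hb). field. lra. }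
 assert (Esplit : wnorm N B blk w p v <= wnorm N B blk w p (restr blk S0 v) + wnorm N B blk w p (restr blk (compl S0) v)).
 { rewrite wnorm_full, !wnorm_restr by auto.
   rewrite (split_compl B S0 (fun b => w b ^ 2 * rpow (blocknorm N blk v b / w b) p)).
   replace (fsum B (fun b => if S0 b then w b ^ 2 * rpow (blocknorm N blk v b / w b) p else 0))
     with (fsum B (fun b => (if S0 b then w b ^ 2 else 0) * rpow (blocknorm N blk v b / w b) p))
     by (apply fsum_ext; intros; destruct (S0 b); ring).
   replace (fsum B (fun b => if compl S0 b then w b ^ 2 * rpow (blocknorm N blk v b / w b) p else 0))
     with (fsum B (fun b => (if compl S0 b then w b ^ 2 else 0) * rpow (blocknorm N blk v b / w b) p))
     by (apply fsum_ext; intros; destruct (compl S0 b); ring).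
   apply rpow_subadd.
   - apply fsum_nonneg; intros; apply Rmult_le_pos; [destruct (S0 b); [apply pow2_ge_0|lra]|apply rpow_nonneg].
   - apply fsum_nonneg; intros; apply Rmult_le_pos; [destruct (compl S0 b); [apply pow2_ge_0|lra]|apply rpow_nonneg].
   - split. apply Rdiv_lt_0_compat; lra. unfold Rdiv. rewrite Rmult_1_l.
     rewrite <- Rinv_1 at 1. apply Rinv_le_contravar; lra. }
 assert (Hcomp : wnorm N B blk w 1 (restr blk (compl S0) v) <= W1 v).
 { unfold W1. rewrite w1_restr, w1_full by auto. apply fsum_le; intros b Hb.
   pose proof (Hw b Hb). pose proof (bn_nonneg N blk v b). destruct (compl S0 b); nra. }
 assert (Hmain0 : wnorm N B blk w p v <= (1 + rho) / al * W1 v + tau * be * eta).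
 { pose proof (A1 S0 HS0'). 
   assert (rho / al * wnorm N B blk w 1 (restr blk (compl S0) v) <= rho / al * W1 v).
   { apply Rmult_le_compat_l; [apply Rdiv_nonneg; lra|exact Hcomp]. }
   assert (W1 v / al = 1 / al * W1 v) by (field; lra).
   assert ((1 + rho) / al * W1 v = rho / al * W1 v + 1 / al * W1 v) by (field; lra). lra. }
 assert (Hmain : forall S, wsize B w S <= s ->
   wnorm N B blk w p v <= C / al * (W1 z - W1 x + 2 * wnorm N B blk w 1 (restr blk (compl S) x)) + D * be * eta).
 { intros S HS. eapply Rle_trans; [exact Hmain0|]. pose proof (Bl1 S HS) as HB.
   set (Q := W1 z - W1 x + 2 * wnorm N B blk w 1 (restr blk (compl S) x)) in *.
   apply Rle_trans with ((1 + rho) / al * ((1 + rho) / (1 - rho) * Q + 2 * (tau * (al * be) * eta) / (1 - rho)) + tau * be * eta).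
   { apply Rplus_le_compat_r. apply Rmult_le_compat_l; [apply Rdiv_nonneg; lra|exact HB]. }
   right. unfold C, D. field. lra. }

 assert (Hlow : forall r, Eset r -> wnorm N B blk w p v <= C / al * (W1 z - W1 x + 2 * r) + D * be * eta).
 { intros r [z' [Hz' ->]].
   set (T := fun b => if Req_EM_T (blocknorm N blk z' b) 0 then false else true).
   assert (HT : wsize B w T <= s) by exact Hz'.
   eapply Rle_trans; [apply (Hmain T HT)|].
   apply Rplus_le_compat_r. apply Rmult_le_compat_l. apply Rdiv_nonneg; lra.
   assert (wnorm N B blk w 1 (restr blk (compl T) x) <= wnorm N B blk w 1 (fun i => x i - z' i)).
   { rewrite w1_restr, w1_full by auto. apply fsum_le; intros b Hb. pose proof (Hw b Hb).
     pose proof (bn_nonneg N blk x b). pose proof (bn_nonneg N blk (fun i => x i - z' i) b).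
     unfold compl, T. destruct Req_EM_T as [e|e]; simpl.
     - assert (Hx3 : blocknorm N blk x b <= blocknorm N blk (fun i => x i - z' i) b + blocknorm N blk z' b)
         by (apply bn_tri; intros; ring). rewrite e in Hx3. nra.
     - nra. }
   lra. }
 replace (D / / be) with (D * be) by (field; lra).
 set (L := (wnorm N B blk w p v - D * be * eta) * (al / (2 * C)) - (W1 z - W1 x) / 2).
 assert (HL : L <= sigma).
 { apply Hglb. intros r Hr. pose proof (Hlow r Hr) as H.
   unfold L. apply Rle_trans with ((C / al * (W1 z - W1 x + 2 * r)) * (al / (2 * C)) - (W1 z - W1 x) / 2).
   - apply Rplus_le_compat_r. apply Rmult_le_compat_r. apply Rdiv_nonneg; lra. lra.
   - right. field. lra. }
 unfold L in HL.
 assert (H : wnorm N B blk w p v - D * be * eta <= (sigma + (W1 z - W1 x) / 2) * (2 * C / al)).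
 { replace (wnorm N B blk w p v - D * be * eta) with
     ((wnorm N B blk w p v - D * be * eta) * (al / (2 * C)) * (2 * C / al)) by (field; lra).
   apply Rmult_le_compat_r. apply Rdiv_nonneg; lra. lra. }
 assert (E5 : (sigma + (W1 z - W1 x) / 2) * (2 * C / al) = C / al * (W1 z - W1 x + 2 * sigma)) by (field; lra).
 unfold W1 in E5. lra.
Qed.
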